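(* Let $a\geq 2$. For Lebesgue-almost every $x\in\Lambda^{a+1}$ we have $\lim_{k\to\infty}T_{a,1}^k(x)=(0,\ldots,0)$ and $\sigma(x)=\sum_{k=0}^{\infty}x_a^{(k)}$.
   Context: For $n\geq 1$ let $\Lambda^n=\{x\in\mathbb{R}^n : 0\leq x_1\leq\cdots\leq x_n\}$. The map $T_{a,1}:\Lambda^{a+1}\to\Lambda^{a+1}$ sends $x$ to the vector obtained by arranging $x_1,\ldots,x_a,\,x_{a+1}-x_a$ in nondecreasing order. Write $x^{(k)}=T_{a,1}^k(x)$ (so $x^{(0)}=x$) and $x^{(k)}_i$ for its $i$-th coordinate; $\sigma(x)=x_1+\cdots+x_{a+1}$. *)

(* Defs.v *)
From HB Require Import structures.
From mathcomp Require Import all_boot all_order all_algebra.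
From mathcomp Require Import all_classical all_reals all_analysis.
Set Implicit Arguments. Unset Strict Implicit. Unset Printing Implicit Defensive.

Import Order.TTheory GRing.Theory Num.Theory.
Import numFieldNormedType.Exports.
Local Open Scope classical_set_scope.
Local Open Scope ring_scope.

(* Coordinates x_1, ..., x_n of the paper are x ord0 0, ..., x ord0 (n-1). *)

Definition Lambda (R : realType) (n : nat) : set 'rV[R]_n :=
  [set x | (forall i : 'I_n, 0 <= x ord0 i) /\
           (forall i j : 'I_n, (i <= j)%N -> x ord0 i <= x ord0 j)].

Definition Ta1 (R : realType) (a : nat) (x : 'rV[R]_a.+1) : 'rV[R]_a.+1 :=
  let s := rcons [seq x ord0 (inord i) | i <- iota 0 a]
                 (x ord0 ord_max - x ord0 (inord a.-1)) in
  \row_(i < a.+1) nth 0 (sort <=%R s) i.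

Definition sigma (R : realType) (n : nat) (x : 'rV[R]_n) : R :=
  \sum_(i < n) x ord0 i.

Definition box_vol (R : realType) (n : nat) (lo hi : 'rV[R]_n) : R :=
  \prod_(i < n) (hi ord0 i - lo ord0 i).

Definition in_box (R : realType) (n : nat) (lo hi x : 'rV[R]_n) : Prop :=
  forall i : 'I_n, lo ord0 i <= x ord0 i <= hi ord0 i.

Definition lebesgue_null (R : realType) (n : nat) (A : set 'rV[R]_n) : Prop :=
  forall eps : R, 0 < eps ->
    exists lo hi : nat -> 'rV[R]_n,
      (forall k (i : 'I_n), lo k ord0 i <= hi k ord0 i) /\
      (forall x, A x -> exists k, in_box (lo k) (hi k) x) /\
      (forall N, \sum_(k < N) box_vol (lo k) (hi k) < eps).
Arguments Lambda {R} n _.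

(* Main.v *)
Require Import Defs.
From HB Require Import structures.
From mathcomp Require Import all_boot all_order all_algebra.
From mathcomp Require Import all_classical all_reals all_analysis.
From mathcomp.algebra_tactics Require Import ring lra.
From mathcomp Require Import zify.
From mathcomp Require Import perm.
Set Implicit Arguments. Unset Strict Implicit. Unset Printing Implicit Defensive.
Import Order.TTheory GRing.Theory Num.Theory.
Import numFieldNormedType.Exports.
Local Open Scope classical_set_scope.
Local Open Scope ring_scope.
Lemma sum_sub_le (T : eqType) (R : numDomainType) (s t : seq T) (h : T -> R) :
  uniq s -> {subset s <= t} -> uniq t -> (forall x, 0 <= h x) ->
  \sum_(x <- s) h x <= \sum_(x <- t) h x.
Proof.
move=> us st ut h0.
rewrite [X in _ <= X](bigID (fun x => x \in s)) /=.
have -> : \sum_(x <- t | x \in s) h x = \sum_(x <- s) h x.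
  rewrite -big_filter; apply: perm_big; apply: uniq_perm => //.
    exact: filter_uniq.
  by move=> x; rewrite mem_filter; case xs: (x \in s) => //=; rewrite st.
by rewrite lerDl sumr_ge0.
Qed.

Lemma sum_pmap (T U : Type) (R : nmodType) (f : T -> option U) (g : U -> R) (r : seq T) :
  \sum_(x <- r) oapp g 0 (f x) = \sum_(y <- pmap f r) g y.
Proof.
elim: r => [|x r IH]; first by rewrite !big_nil.
rewrite big_cons /= IH; case: (f x) => [y|] /=; first by rewrite big_cons.
by rewrite add0r.
Qed.

Lemma geom_sum (R : realFieldType) (eps : R) (M : nat) :
  \sum_(x < M) eps / 2 ^+ x.+2 = eps / 2 - eps / 2 ^+ M.+1.
Proof.
elim: M => [|M IH]; first by rewrite big_ord0 expr1 subrr.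
rewrite big_ord_recr /= IH !exprS.
have h2 : (2 : R) ^+ M != 0 by rewrite expf_neq0 // pnatr_eq0.
field; rewrite ?h2 ?pnatr_eq0 //.
Qed.

Lemma box_vol0 (R : realType) (n : nat) : box_vol (0 : 'rV[R]_n.+1) 0 = 0.
Proof. by rewrite /box_vol big_ord_recl !mxE subrr mul0r. Qed.

Lemma null_cover (R : realType) (n : nat) (I : countType)
  (A : I -> set 'rV[R]_n.+1) (N : set 'rV[R]_n.+1) :
  (forall i, lebesgue_null (A i)) -> (forall x, N x -> exists i, A i x) ->
  lebesgue_null N.
Proof.
move=> hA hN eps e0.
pose w := fun i : I => eps / 2 ^+ (pickle i).+2.
have w0 i : 0 < w i by rewrite divr_gt0 // exprn_gt0.
have hex : forall i : I, exists p : (nat -> 'rV[R]_n.+1) * (nat -> 'rV[R]_n.+1),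
   [/\ (forall k (j : 'I_n.+1), p.1 k ord0 j <= p.2 k ord0 j),
       (forall x, A i x -> exists k, in_box (p.1 k) (p.2 k) x) &
       (forall M, \sum_(k < M) box_vol (p.1 k) (p.2 k) < w i)].
  move=> i; have [lo [hi [h1 [h2 h3]]]] := hA i (w i) (w0 i).
  by exists (lo, hi); split.
have [F hF] := choice hex.
pose lo k := if pickle_inv k is Some p then (F p.1).1 p.2 else 0.
pose hi k := if pickle_inv k is Some p then (F p.1).2 p.2 else 0.
exists lo, hi; split; [|split].
- move=> k j; rewrite /lo /hi; case: (pickle_inv k) => [[i m]|] /=.
    by have [h1 _ _] := hF i.
  by rewrite mxE.
- move=> x /hN [i Ai]; have [_ h2 _] := hF i.
  have [m hm] := h2 x Ai; exists (pickle (i, m)).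
  by rewrite /lo /hi pickleK_inv.
move=> Nn.
pose g := fun p : I * nat => box_vol ((F p.1).1 p.2) ((F p.1).2 p.2).
have g0 p : 0 <= g p.
  rewrite /g /box_vol; apply: prodr_ge0 => j _; rewrite subr_ge0.
  by have [h1 _ _] := hF p.1.
have -> : \sum_(k < Nn) box_vol (lo k) (hi k) =
          \sum_(p <- pmap pickle_inv (iota 0 Nn)) g p.
  rewrite -sum_pmap -(big_mkord xpredT (fun k => box_vol (lo k) (hi k))).
  rewrite /index_iota subn0; apply: eq_bigr => k _.
  by rewrite /lo /hi; case: (pickle_inv k) => [p|] //=; rewrite box_vol0.
set s := pmap pickle_inv (iota 0 Nn).
have us : uniq s by rewrite /s (pmap_uniq (@pickle_invK _)) // iota_uniq.
pose f := fun p : I * nat => (pickle p.1, p.2).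
pose h := fun q : nat * nat => if pickle_inv q.1 is Some i then g (i, q.2) else 0.
have h0 q : 0 <= h q by rewrite /h; case: (pickle_inv q.1).
have -> : \sum_(p <- s) g p = \sum_(q <- map f s) h q.
  rewrite big_map; apply: eq_bigr => [[i m]] _.
  by rewrite /h /f /= pickleK_inv.
have uf : uniq (map f s).
  rewrite map_inj_uniq // => [[i m]] [i' m'] [/= e1 ->].
  by rewrite (pcan_inj pickleK e1).
pose M := (\max_(q <- map f s) maxn q.1 q.2).+1.
pose t := [seq (x, y) | x <- iota 0 M, y <- iota 0 M].
have ut : uniq t.
  apply: allpairs_uniq; try exact: iota_uniq.
  by move=> [x y] [x' y'] _ _ /= [-> ->].
have sub : {subset map f s <= t}.
  move=> q qin; rewrite /t; case: q qin => x y qin.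
  have := @leq_bigmax_seq _ _ xpredT (fun q : nat * nat => maxn q.1 q.2) (x, y) qin isT.
  rewrite -/M => hq; apply/allpairsP; exists (x, y); split => //;
    rewrite mem_iota add0n.
    by rewrite ltnS; exact: leq_trans (leq_maxl _ _) hq.
  by rewrite ltnS; exact: leq_trans (leq_maxr _ _) hq.
apply: (le_lt_trans (sum_sub_le uf sub ut h0)).
rewrite big_allpairs.
apply: (@le_lt_trans _ _ (\sum_(x <- iota 0 M) eps / 2 ^+ x.+2)).
  apply: ler_sum => x _.
  rewrite /h /=; case e: (pickle_inv x) => [i|]; last first.
    by rewrite big1 // divr_ge0 ?exprn_ge0 // ltW.
  have [_ _ h3] := hF i.
  have := h3 M; rewrite /w.
  have -> : pickle i = x by have := (@pickle_invK I x); rewrite e.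
  move/ltW; apply: le_trans; rewrite -(big_mkord xpredT (fun k => box_vol ((F i).1 k) ((F i).2 k))).
  by rewrite /index_iota subn0.
rewrite -{1}(subn0 M) -/(index_iota 0 M) big_mkord geom_sum.
rewrite -[X in _ < X](subrK (eps / 2)) -[X in _ < X - _ + _]mulr1.
set e2 := eps / 2.
have : 0 < eps / 2 ^+ M.+1 by rewrite divr_gt0 // exprn_gt0.
have -> : eps * 1 - e2 = e2 by rewrite /e2; field.
move=> hp; rewrite ltrBlDr; rewrite -addrA ltrDl.
by rewrite addr_gt0 // divr_gt0.
Qed.
Lemma sum_trunc (R : numDomainType) (f : nat -> R) (V : R) (n T : nat) :
  (forall k, f k = if (k < T)%N then V else 0) -> 0 <= V ->
  \sum_(k < n) f k <= V * T%:R.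
Proof.
move=> hf V0.
suff : \sum_(k < n) f k <= V * (minn n T)%:R.
  move/le_trans; apply; rewrite ler_wpM2l // ler_nat; exact: geq_minr.
elim: n => [|n IH]; first by rewrite big_ord0 min0n mulr0.
rewrite big_ord_recr /= hf; case: ltnP => hn.
  have e1 : minn n T = n by apply/minn_idPl; exact: ltnW.
  have -> : minn n.+1 T = n.+1 by apply/minn_idPl.
  by rewrite mulrSr mulrDr mulr1 lerD2r; rewrite e1 in IH.
rewrite addr0; apply: (le_trans IH); rewrite ler_wpM2l // ler_nat.
by rewrite (minn_idPr hn) (minn_idPr (leqW hn)).
Qed.

Lemma hyper_null (R : realType) (a : nat) (c : {ffun 'I_a.+1 -> int}) (B : nat) :
  c != 0 ->
  lebesgue_null [set x : 'rV[R]_a.+1 | \sum_i x ord0 i * (c i)%:~R = 0 /\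
                                        forall i, `|x ord0 i| <= B%:R].
Proof.
move=> c0.
have [j cj] : exists j, c j != 0.
  apply/existsP; apply: contraNT c0 => /existsPn h; apply/eqP/ffunP => i.
  by rewrite ffunE; exact/eqP/negPn/h.
pose cr i : R := (c i)%:~R.
pose C : R := \sum_i `|cr i|.
have crj : 1 <= `|cr j|.
  rewrite /cr -intr_norm -[1]/(1%:~R) ler_int.
  by have : 0 < `|c j| by rewrite normr_gt0.
have CE : C = `|cr j| + \sum_(i < a) `|cr (lift j i)|.
  by rewrite /C (bigD1_ord j) //.
have C1 : 1 <= C by rewrite CE; apply: (le_trans crj); rewrite lerDl sumr_ge0.
move=> eps e0.
have C0 : 0 < C by apply: lt_le_trans C1.
pose L : nat := (Num.truncn ((2 * B + 2)%:R ^+ a * (2 * C) / eps)).+1.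
have L0 : (0 < L%:R :> R) by rewrite ltr0n.
have hL : (2 * B + 2)%:R ^+ a * (2 * C) / eps < L%:R by exact: truncnS_gt.
pose K := ((2 * B + 1) * L)%N.
pose T := {ffun 'I_a -> 'I_K.+1}.
pose aa (t : T) (i : 'I_a) : R := - B%:R + (t i)%:R / L%:R.
pose m (t : T) : R := - (\sum_i cr (lift j i) * aa t i) / cr j.
pose lo (t : T) : 'rV[R]_a.+1 :=
  \row_i (if unlift j i is Some i' then aa t i' else m t - C / L%:R).
pose hi (t : T) : 'rV[R]_a.+1 :=
  \row_i (if unlift j i is Some i' then aa t i' + 1 / L%:R else m t + C / L%:R).
pose lo' k := if (insub k : option 'I_#|{: T}|) is Some k' then lo (enum_val k') else 0.
pose hi' k := if (insub k : option 'I_#|{: T}|) is Some k' then hi (enum_val k') else 0.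
have CL0 : 0 <= C / L%:R by apply: divr_ge0; exact: ltW.
have L10 : 0 <= 1 / L%:R :> R by apply: divr_ge0 => //; exact: ltW.
exists lo', hi'; split; [|split].
- move=> k i; rewrite /lo' /hi'; case: insub => [k'|]; last by rewrite !mxE.
  rewrite !mxE; case: unlift => [i'|]; first by rewrite lerDl.
  by rewrite lerD2l; apply: le_trans (CL0); rewrite lerNl oppr0.
- move=> x [hs hb].
  have hy i' : 0 <= (x ord0 (lift j i') + B%:R) * L%:R.
    rewrite mulr_ge0 ?ler0n // -lerBlDr sub0r.
    by have := hb (lift j i'); rewrite ler_norml => /andP[].
  pose tt : T := [ffun i' => inord (Num.truncn ((x ord0 (lift j i') + B%:R) * L%:R))].
  have htt i' : ((tt i') : nat) = Num.truncn ((x ord0 (lift j i') + B%:R) * L%:R).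
    rewrite ffunE inordK // ltnS truncn_le_nat /K.
    apply: (@le_lt_trans _ _ ((2 * B)%:R * L%:R)).
      rewrite ler_pM2r // natrM.
      by have := hb (lift j i'); rewrite ler_norml => /andP[_ h]; lra.
    rewrite -natrM ltr_nat ltnS; move: (L) => l; clear; nia.
  have hx i' : aa tt i' <= x ord0 (lift j i') <= aa tt i' + 1 / L%:R.
    have /andP[t1 t2] := truncn_itv (hy i').
    rewrite /aa htt; set t := Num.truncn _ in t1 t2 *.
    have h1 : t%:R / L%:R <= x ord0 (lift j i') + B%:R by rewrite ler_pdivrMr.
    have h2 : x ord0 (lift j i') + B%:R < t%:R / L%:R + 1 / L%:R.
      by rewrite -mulrDl natr1 ltr_pdivlMr.
    apply/andP; split; lra.
  exists (enum_rank tt); rewrite /lo' /hi' valK enum_rankK => i.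
  rewrite !mxE; case: (unliftP j i) => [i' ->|->]; first exact: hx.
  rewrite -ler_distl.
  have crj0 : cr j != 0 by rewrite /cr intr_eq0.
  move: hs; rewrite (bigD1_ord j) //= => hs.
  have hm : m tt * cr j = - \sum_i cr (lift j i) * aa tt i by rewrite /m mulfVK.
  have hj : x ord0 j * cr j = - \sum_i x ord0 (lift j i) * cr (lift j i).
    by apply/eqP; rewrite -addr_eq0; apply/eqP.
  have e : x ord0 j - m tt =
      (\sum_i cr (lift j i) * (aa tt i - x ord0 (lift j i))) / cr j.
    apply: (mulIf crj0); rewrite mulrBl hm hj divfK // opprK.
    rewrite [RHS](eq_bigr (fun i => cr (lift j i) * aa tt i - x ord0 (lift j i) * cr (lift j i))); last first.
      by move=> k _; rewrite mulrBr (mulrC (cr _) (x _ _)).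
    by rewrite sumrB addrC.
  rewrite e normrM normfV.
  have hcj0 : 0 < `|cr j| by apply: lt_le_trans crj.
  apply: (@le_trans _ _ (`|\sum_i cr (lift j i) * (aa tt i - x ord0 (lift j i))|)).
    by rewrite ler_pdivrMr // ler_peMr.
  apply: (le_trans (ler_norm_sum _ _ _)).
  apply: (@le_trans _ _ (\sum_(i < a) `|cr (lift j i)| * (1 / L%:R))).
    apply: ler_sum => k _; rewrite normrM ler_wpM2l //.
    have /andP[u1 u2] := hx k; rewrite ler_norml; apply/andP; split; lra.
  rewrite -mulr_suml mulrC mul1r mulrC ler_wpM2r //.
  by rewrite CE lerDr.
move=> Nn.
have hV t : box_vol (lo t) (hi t) = (2 * C / L%:R) * (1 / L%:R) ^+ a.
  rewrite /box_vol (bigD1_ord j) //= !mxE unlift_none.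
  congr (_ * _); first by ring.
  rewrite -[X in _ = _ ^+ X](card_ord a) -prodr_const; apply: eq_bigr => i _.
  by rewrite !mxE liftK addrAC subrr add0r.
apply: le_lt_trans.
  apply: (@sum_trunc R (fun k => box_vol (lo' k) (hi' k)) (2 * C / L%:R * (1 / L%:R) ^+ a) Nn #|{: T}|).
- move=> k; rewrite /lo' /hi'; case: insubP => [k' kin kv|kn].
    by rewrite kin hV.
  by rewrite (negbTE kn) box_vol0.
- by apply: mulr_ge0; [apply: divr_ge0; [rewrite mulr_ge0 // ltW| exact: ltW] | exact: exprn_ge0].
rewrite card_ffun !card_ord natrX -(mulrA (2 * C / L%:R)) -exprMn.
have hK : 1 / L%:R * K.+1%:R <= (2 * B + 2)%:R :> R.
  rewrite mul1r mulrC ler_pdivrMr // -natrM ler_nat /K.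
  have : (0 < L)%N by [].
  clear; nia.
apply: (@le_lt_trans _ _ (2 * C / L%:R * (2 * B + 2)%:R ^+ a)).
  rewrite ler_wpM2l //; first by apply: divr_ge0; [rewrite mulr_ge0 // ltW | exact: ltW].
  apply: lerXn2r => //; rewrite nnegrE ?mulr_ge0 //.
move: hL; rewrite ltr_pdivrMr // => hL.
rewrite mulrAC ltr_pdivrMr //.
by rewrite [X in X < _]mulrC [X in _ < X]mulrC.
Qed.

Section Dyn.
Variables (R : realType) (a : nat).
Hypothesis ha : (2 <= a)%N.

Let j0 : 'I_a.+1 := inord a.-1.

Definition sq (y : 'rV[R]_a.+1) : seq R :=
  rcons [seq y ord0 (inord i) | i <- iota 0 a] (y ord0 ord_max - y ord0 (inord a.-1)).

Definition w (y : 'rV[R]_a.+1) : 'rV[R]_a.+1 :=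
  \row_k (y ord0 k - (k == ord_max)%:R * y ord0 j0).

Lemma j0_val : (j0 : nat) = a.-1.
Proof. by rewrite /j0 inordK // ltnS leq_pred. Qed.

Lemma j0_neq : j0 != ord_max.
Proof. rewrite -val_eqE /= j0_val; apply/eqP; lia. Qed.

Lemma size_sq (y : 'rV[R]_a.+1) : size (sq y) = a.+1.
Proof. by rewrite /sq size_rcons size_map size_iota. Qed.

Lemma nth_sq (y : 'rV[R]_a.+1) (k : 'I_a.+1) : nth 0 (sq y) k = w y ord0 k.
Proof.
rewrite /sq nth_rcons size_map size_iota mxE.
case: ltnP => hk.
  rewrite (nth_map 0%N) ?size_iota // nth_iota // add0n.
  have -> : (k == ord_max) = false by apply/negbTE; apply/eqP => e; move: hk; rewrite e /= ltnn.
  by rewrite mul0r subr0; congr (y _ _); apply: val_inj; rewrite /= inordK.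
have ka : (k : nat) = a by have := ltn_ord k; rewrite ltnS => h; apply/eqP; rewrite eqn_leq h hk.
have -> : k = ord_max by apply: val_inj.
by rewrite !eqxx mul1r.
Qed.

Lemma Ta1_perm (y : 'rV[R]_a.+1) : exists p : 'S_a.+1, Ta1 y = col_perm p (w y).
Proof.
have hs : size (sq y) == a.+1 by rewrite size_sq.
pose ts := Tuple hs.
have : perm_eq (sort <=%R (sq y)) ts by rewrite perm_sort.
case/tuple_permP => p hp; exists p.
apply/rowP => i; rewrite /Ta1 !mxE -/(sq y) hp nth_mktuple.
by rewrite (tnth_nth 0) /= nth_sq mxE.
Qed.


Lemma sum_w (y : 'rV[R]_a.+1) : \sum_i w y ord0 i = sigma y - y ord0 j0.
Proof.
rewrite /sigma; under eq_bigr do rewrite mxE.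
rewrite sumrB; congr (_ - _).
rewrite (bigD1 ord_max) //= eqxx mul1r big1 ?addr0 // => i /negbTE ->.
by rewrite mul0r.
Qed.

Lemma sigma_T (y : 'rV[R]_a.+1) : sigma (Ta1 y) = sigma y - y ord0 j0.
Proof.
have [p ->] := Ta1_perm y; rewrite -sum_w /sigma.
under eq_bigr do rewrite mxE.
by rewrite [RHS](reindex_inj (@perm_inj _ p)).
Qed.

Lemma Ta1E (y : 'rV[R]_a.+1) (i : 'I_a.+1) : Ta1 y ord0 i = nth 0 (sort <=%R (sq y)) i.
Proof. by rewrite /Ta1 mxE. Qed.

Lemma Lambda_T (y : 'rV[R]_a.+1) : Lambda a.+1 y -> Lambda a.+1 (Ta1 y).
Proof.
move=> [y0 ymon]; split.
  move=> i; have [p ->] := Ta1_perm y; rewrite !mxE.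
  case: eqP => [->|_]; last by rewrite mul0r subr0.
  by rewrite mul1r subr_ge0; apply: ymon; exact: leq_ord.
move=> i k ik; rewrite !Ta1E.
apply: le_sorted_leq_nth => //; first exact: (sort_sorted (@le_total _ R)).
  by rewrite inE size_sort size_sq.
by rewrite inE size_sort size_sq.
Qed.

Lemma step_T (y : 'rV[R]_a.+1) : Lambda a.+1 y -> y ord0 j0 <= y ord0 ord_max - y ord0 j0 ->
  Ta1 y ord0 j0 = y ord0 j0.
Proof.
move=> [y0 ymon] hy.
have ss : sorted <=%R (sq y).
  apply/(sortedP 0) => i; rewrite size_sq ltnS => hi.
  have hi' : (i < a.+1)%N by apply: ltnW.
  have := nth_sq y (@Ordinal a.+1 i hi'); have := nth_sq y (@Ordinal a.+1 i.+1 hi) => /= -> ->.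
  rewrite !mxE /=.
  have -> : (@Ordinal a.+1 i hi' == ord_max) = false.
    by apply/negbTE; rewrite -val_eqE /= neq_ltn hi.
  case: (ltnP i.+1 a) => h.
    have -> : (@Ordinal a.+1 i.+1 hi == ord_max) = false.
      by apply/negbTE; rewrite -val_eqE /= neq_ltn h.
    by rewrite (_ : (false%:R : R) = 0) // !mul0r !subr0; apply: ymon => /=.
  have ea : i.+1 = a by apply/eqP; rewrite eqn_leq h hi.
  have -> : @Ordinal a.+1 i.+1 hi = ord_max by apply: val_inj; rewrite /= ea.
  have -> : @Ordinal a.+1 i hi' = j0 by apply: val_inj; rewrite /= j0_val -ea.
  by rewrite eqxx (_ : (false%:R : R) = 0) // (_ : (true%:R : R) = 1) // mul0r subr0 mul1r.
rewrite Ta1E (sorted_sort le_trans ss) nth_sq mxE.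
by rewrite (negbTE j0_neq) mul0r subr0.
Qed.

Definition Ei : 'M[int]_a.+1 := 1%:M - delta_mx j0 ord_max.

Lemma Ei_unit : Ei \in unitmx.
Proof.
apply: (proj1 (@mulmx1_unit _ _ Ei (1%:M + delta_mx j0 ord_max) _)).
rewrite /Ei mulmxBl mulmxDr !mul1mx mulmxDr mulmx1 mul_delta_mx_0.
  by rewrite addr0 addrK.
by rewrite eq_sym j0_neq.
Qed.

Lemma w_mul (y : 'rV[R]_a.+1) : w y = y *m map_mx (intmul 1) Ei.
Proof.
apply/rowP => k; rewrite /Ei map_mxB map_mx1 map_delta_mx mulmxBr mulmx1 !mxE.
congr (_ - _).
rewrite (bigD1 j0) //= !mxE eqxx big1 ?addr0.
  by rewrite mulrC andTb; case: eqP.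
by move=> i /negbTE hi; rewrite mxE hi mulr0.
Qed.

Lemma T_mul (y : 'rV[R]_a.+1) : exists M : 'M[int]_a.+1, M \in unitmx /\ Ta1 y = y *m map_mx (intmul 1) M.
Proof.
have [p ->] := Ta1_perm y.
exists (Ei *m perm_mx p^-1); split.
  by rewrite unitmx_mul Ei_unit unitmx_perm.
by rewrite col_permE w_mul map_mxM map_perm_mx mulmxA.
Qed.

End Dyn.

Lemma null_sub (R : realType) n (A B : set 'rV[R]_n) :
  lebesgue_null B -> A `<=` B -> lebesgue_null A.
Proof.
move=> hB sAB eps e0; have [lo [hi [h1 [h2 h3]]]] := hB eps e0.
by exists lo, hi; split => //; split => // x /sAB; exact: h2.
Qed.

Lemma null_empty (R : realType) n (A : set 'rV[R]_n.+1) :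
  (forall x, ~ A x) -> lebesgue_null A.
Proof.
move=> hA eps e0; exists (fun _ => 0), (fun _ => 0); split; [|split].
- by move=> k i; rewrite mxE.
- by move=> x /hA.
- by move=> N; rewrite big1 // => k _; exact: box_vol0.
Qed.

Lemma iter_mul (R : realType) (a : nat) (ha : (2 <= a)%N) (x : 'rV[R]_a.+1) k :
  exists M : 'M[int]_a.+1, M \in unitmx /\
    iter k (@Ta1 R a) x = x *m map_mx (intmul 1) M.
Proof.
elim: k => [|k [M [Mu hM]]].
  by exists 1%:M; split; [exact: unitmx1 | rewrite map_mx1 mulmx1].
have [M' [M'u hM']] := T_mul ha (iter k (@Ta1 R a) x).
exists (M *m M'); split; first by rewrite unitmx_mul Mu M'u.
by rewrite iterS hM' hM map_mxM mulmxA.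
Qed.

Lemma col_nz n (M : 'M[int]_n) j : M \in unitmx -> exists i, M i j != 0.
Proof.
move=> Mu.
suff : [exists i, M i j != 0] by case/existsP => i hi; exists i.
apply: contraT => /existsPn h.
have e := congr1 (fun A : 'M[int]_n => A j j) (mulVmx Mu).
move: e; rewrite /= !mxE eqxx big1 //.
by move=> i _; rewrite (eqP (negbNE (h i))) mulr0.
Qed.

Unset Implicit Arguments.
Set Strict Implicit.

Theorem corollary4p4 (R : realType) (a : nat) (ha : (2 <= a)%N) :
  exists N : set 'rV[R]_a.+1, lebesgue_null N /\
    forall x : 'rV[R]_a.+1, Lambda a.+1 x -> ~ N x ->
      ((fun k : nat => iter k (@Ta1 R a) x) @ \oo --> (0 : 'rV[R]_a.+1)) /\
      ((series (fun k : nat => (iter k (@Ta1 R a) x) ord0 (inord a.-1)))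
         @ \oo --> sigma x).
Proof.
pose N := [set x : 'rV[R]_a.+1 | exists c : {ffun 'I_a.+1 -> int},
            c != 0 /\ \sum_i x ord0 i * (c i)%:~R = 0].
exists N; split.
  pose A := fun p : {ffun 'I_a.+1 -> int} * nat =>
    [set x : 'rV[R]_a.+1 | p.1 != 0 /\ (\sum_i x ord0 i * (p.1 i)%:~R = 0 /\
                                         forall i, `|x ord0 i| <= p.2%:R)].
  apply: (@null_cover R a _ A).
    move=> [c B]; case: (eqVneq c 0) => [->|c0].
      by apply: null_empty => x [h _]; move: h; rewrite eqxx.
    by apply: null_sub (@hyper_null R a c B c0) _ => x [_ h].
  move=> x [c [c0 hs]].
  pose B := Num.truncn (\sum_i `|x ord0 i|).
  exists (c, B.+1); split => //; split => // i /=.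
  apply: (le_trans _ (ltW (truncnS_gt _))).
  by rewrite (bigD1 i) //= lerDl sumr_ge0.
move=> x xL xN.
pose y := fun k => iter k (@Ta1 R a) x.
have yL k : Lambda a.+1 (y k) by elim: k => //= k IH; exact: Lambda_T.
pose u := fun k => y k ord0 (inord a.-1).
pose S := fun k => sigma (y k).
have Su k : S k.+1 = S k - u k by rewrite /S /y iterS sigma_T.
have u0 k : 0 <= u k by have [h _] := yL k; exact: h.
have S0 k : 0 <= S k by rewrite sumr_ge0 // => i _; have [h _] := yL k; exact: h.
have unz k : u k != 0.
  apply/eqP => e; apply: xN.
  have [M [Mu hM]] := iter_mul ha x k.
  have [i0 hi0] := col_nz (inord a.-1) Mu.
  exists [ffun i => M i (inord a.-1)]; split.
    by apply/eqP => /ffunP/(_ i0); rewrite !ffunE; apply/eqP.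
  move: e; rewrite /u /y hM !mxE => e; rewrite -[X in _ = X]e; apply: eq_bigr => i _.
  by rewrite !ffunE mxE.
have seriesE n : series u n = S 0 - S n.
  elim: n => [|n IH]; first by rewrite /series /= big_geq // subrr.
  by have := seriesSB u n; rewrite IH Su => h; lra.
have Snoninc : {homo S : n m / (n <= m)%N >-> m <= n}.
  by apply/nonincreasing_seqP => k; rewrite Su lerBlDr lerDl.
have Scvg : cvgn S.
  by apply: nonincreasing_is_cvgn => //; exists 0 => _ [k _ <-].
have cS k : limn S <= S k := nonincreasing_cvgn_ge Snoninc Scvg k.
have c0 : 0 <= limn S by apply: limr_ge => //; apply: nearW => k; exact: S0.
have serE : series u = (fun n => S 0 - S n) by apply: funext => n; exact: seriesE.
have ucvg : u @ \oo --> 0.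
  apply: cvg_series_cvg_0; rewrite serE.
  by apply: is_cvgB; [exact: is_cvg_cst | exact: Scvg].
have ymon k (i : 'I_a.+1) : (i <= a.-1)%N -> y k ord0 i <= u k.
  move=> hi; have [_ h] := yL k; apply: h; rewrite inordK //.
  by case: (a) ha => // b _; rewrite ltnS /= leqnSn.
have Ssplit k : S k = \sum_(i < a) y k ord0 (widen_ord (leqnSn a) i) + y k ord0 ord_max.
  by rewrite /S /sigma big_ord_recr.
have Slow k : S k <= u k * a%:R + y k ord0 ord_max.
  rewrite Ssplit lerD2r.
  apply: (@le_trans _ _ (\sum_(i < a) u k)).
    apply: ler_sum => i _; apply: ymon => /=.
    by have := ltn_ord i; lia.
  by rewrite sumr_const card_ord mulr_natr.
have c_eq0 : limn S = 0.
  apply/eqP; rewrite eq_le c0 andbT leNgt; apply/negP => hc.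
  have e0 : 0 < limn S / (a.+2)%:R by rewrite divr_gt0.
  have := @cvgr0_norm_lt _ _ _ _ _ u ucvg _ e0.
  case=> K _ hK.
  have hstep k : (K <= k)%N -> u k.+1 = u k.
    move=> Kk; have /= hu := hK k Kk.
    rewrite ger0_norm // ltr_pdivlMr ?ltr0n // -addn2 natrD mulrDr in hu.
    have h1 := Slow k; have h2 := cS k.
    rewrite /u /y iterS; apply: (step_T ha (yL k)).
    rewrite -/(y k) -/(u k).
    move: hu h1; move: (u k * a%:R) => P; lra.
  have hconst d : u (K + d)%N = u K.
    by elim: d => [|d IH]; rewrite ?addn0 // addnS hstep ?IH // leq_addr.
  have uK0 : 0 < u K by rewrite lt_neqAle eq_sym unz u0.
  have := @cvgr0_norm_lt _ _ _ _ _ u ucvg _ uK0.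
  case=> K2 _ hK2.
  have := hK2 (K + K2)%N (leq_addl _ _); rewrite /= hconst ger0_norm // ltxx.
  by [].
have Scv0 : S @ \oo --> 0 by rewrite -c_eq0; exact: Scvg.
have ynorm k : `|y k| <= S k.
  change (mx_norm (y k) <= S k).
  case: (eqVneq (mx_norm (y k)) 0) => [->|/mx_norm_neq0 [[i j] ->]] //.
  rewrite /= (ord1 i) ger0_norm; last by have [h _] := yL k; exact: h.
  rewrite /S /sigma (bigD1 j) //= lerDl sumr_ge0 // => l _.
  by have [h _] := yL k; exact: h.
split.
  apply/cvgr0Pnorm_lt => eps e0.
  have := @cvgr0_norm_lt _ _ _ _ _ S Scv0 _ e0.
  case=> K _ hK; exists K => // k /hK /= hk; apply: le_lt_trans (ynorm k) _.
  by rewrite ger0_norm // in hk.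
rewrite serE (_ : sigma x = S 0 - 0); last by rewrite subr0.
by apply: cvgB; [exact: cvg_cst | exact: Scv0].
Qed.
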